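(* Let $d\ge2$, $T>1$, $\eta,\beta>0$, and let $\mathbf r_1,\mathbf r_2,\dots\in[0,1]^d\setminus\{\mathbf 0\}$ be any sequence of returns. Then for all $t\ge1$, the regularizer $\Phi_t$ of DONS (as in the context) is a self-concordant function on the interior of $\mathcal C_{d-1}$ with constant $M_{\Phi_t}\le\sqrt{\eta e}$.
   Context: Notation. $\mathcal C_{d-1}=\{\mathbf u\in\mathbb R^{d-1}: u_i\ge0,\ \sum_iu_i\le1\}$; for $\mathbf v\in\mathbb R^{d-1}$, $\bar{\mathbf v}=(v_1,\dots,v_{d-1},1-\sum_{i=1}^{d-1}v_i)\in\mathbb R^d$, i.e. $\bar{\mathbf v}=\mathbf e_d+J^\top\mathbf v$ with $J=[I_{d-1}\ \ -\mathbf 1]$; $\mathbf 1$ is all-ones; $\|\mathbf x\|_A=\sqrt{\mathbf x^\top A\mathbf x}$. Self-concordance: for a convex compact $\mathcal K$ with nonempty interior, a convex $f:\operatorname{int}\mathcal K\to\mathbb R$ is self-concordant with constant $M\ge0$ if $f$ is $C^3$, $f(\mathbf x_k)\to+\infty$ as $\mathbf x_k\to\mathbf x\in\partial\mathcal K$, and $|\nabla^3f(\mathbf x)[\mathbf u,\mathbf u,\mathbf u]|\le2M\|\mathbf u\|^3_{\nabla^2f(\mathbf x)}$ for all $\mathbf x\in\operatorname{int}\mathcal K$, $\mathbf u$. DONS (parameters $\eta,\beta>0$, horizon $T$). Set $\mathbf w_1=\mathbf 1/d\in\mathbb R^{d-1}$, $\boldsymbol\rho_0=d\mathbf 1\in\mathbb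 R^d$. For $t\ge0$ let $\eta_{t,i}=\eta\exp(\log_T(\rho_{t,i}/d))$, $\Psi_t(\mathbf x)=-\sum_{i=1}^d\ln(\bar x_i)/\eta_{t,i}$, $\Phi_t(\mathbf x)=\Psi_t(\mathbf x)+\frac{\beta d}{8}\|\mathbf x\|^2+\frac\beta8\sum_{s=1}^t\langle\mathbf g_s,\mathbf x-\mathbf w_s\rangle^2$. At round $t=1,2,\dots$: play $\mathbf u_t=(1-\frac1T)\mathbf w_t+\frac1{dT}\mathbf 1$; observe $\mathbf r_t$, set $\mathbf g_t=J\mathbf r_t/\langle\mathbf r_t,\bar{\mathbf u}_t\rangle$; for $i\in\{1,\dots,d\}$, $\rho_{t,i}=1/\bar u_{t,i}$ if $2\rho_{t-1,i}<1/\bar u_{t,i}$, else $\rho_{t,i}=\rho_{t-1,i}$; set $\boldsymbol\nabla_t=\nabla\Phi_t(\mathbf w_t)+\sum_{s=1}^t(\mathbf g_s-\nabla\Psi_s(\mathbf w_s)+\nabla\Psi_{s-1}(\mathbf w_s))$ and $\mathbf w_{t+1}=\mathbf w_t-\frac{(\nabla^2\Phi_t(\mathbf w_t))^{-1}\boldsymbol\nabla_t}{1+4\sqrt{e\eta}\|\boldsymbol\nabla_t\|_{(\nabla^2\Phi_t(\mathbf w_t))^{-1}}}$. *)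

(* Defs.v *)
From HB Require Import structures.
From mathcomp Require Import all_boot all_order all_algebra.
From mathcomp Require Import all_classical all_reals all_analysis.
Set Implicit Arguments. Unset Strict Implicit. Unset Printing Implicit Defensive.
Import Order.TTheory GRing.Theory Num.Theory.
Import numFieldNormedType.Exports.
Local Open Scope classical_set_scope.
Local Open Scope ring_scope.

Section SelfConcordance.
Variables (R : realType) (n : nat).

Definition evec (i : 'I_n) : 'rV[R]_n := delta_mx 0 i.

Definition partial (i : 'I_n) (f : 'rV[R]_n -> R) : 'rV[R]_n -> R :=
  fun x => derive f x (evec i).

Definition C3_on (U : set 'rV[R]_n) (f : 'rV[R]_n -> R) : Prop :=
  (forall x, U x -> {for x, continuous f}) /\
  (forall i x, U x -> derivable f x (evec i)) /\
  (forall i x, U x -> {for x, continuous (partial i f)}) /\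
  (forall i j x, U x -> derivable (partial i f) x (evec j)) /\
  (forall i j x, U x -> {for x, continuous (partial j (partial i f))}) /\
  (forall i j k x, U x -> derivable (partial j (partial i f)) x (evec k)) /\
  (forall i j k x, U x ->
     {for x, continuous (partial k (partial j (partial i f)))}).

Definition grad (f : 'rV[R]_n -> R) (x : 'rV[R]_n) : 'rV[R]_n :=
  \row_i partial i f x.
Definition hess (f : 'rV[R]_n -> R) (x : 'rV[R]_n) : 'M[R]_n :=
  \matrix_(i, j) partial j (partial i f) x.
Definition D3 (f : 'rV[R]_n -> R) (x u : 'rV[R]_n) : R :=
  \sum_i \sum_j \sum_k
    partial k (partial j (partial i f)) x * u 0 i * u 0 j * u 0 k.

Definition anorm (A : 'M[R]_n) (u : 'rV[R]_n) : R :=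
  Num.sqrt ((u *m A *m u^T) 0 0).

Definition convex_set (K : set 'rV[R]_n) : Prop :=
  forall x y (l : R), K x -> K y -> 0 <= l <= 1 -> K (l *: x + (1 - l) *: y).

Definition convex_on (U : set 'rV[R]_n) (f : 'rV[R]_n -> R) : Prop :=
  forall x y (l : R), U x -> U y -> 0 <= l <= 1 ->
    f (l *: x + (1 - l) *: y) <= l * f x + (1 - l) * f y.

Definition self_concordant (K : set 'rV[R]_n) (f : 'rV[R]_n -> R) (M : R)
  : Prop :=
  convex_set K /\ compact K /\ interior K !=set0 /\ 0 <= M /\
      convex_on (interior K) f /\ C3_on (interior K) f /\
      (forall (xs : nat -> 'rV[R]_n) (x : 'rV[R]_n),
          (forall k, interior K (xs k)) -> xs @ \oo --> x ->
          (closure K `\` interior K) x ->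
          (f \o xs) @ \oo --> +oo) /\
      (forall x u, interior K x ->
          `|D3 f x u| <= 2 * M * (anorm (hess f x) u) ^+ 3).

End SelfConcordance.

Section DONS.
Variables (R : realType) (d : nat).

Definition Cset : set 'rV[R]_d.-1 :=
  [set u | (forall i, 0 <= u 0 i) /\ \sum_i u 0 i <= 1].

Definition dotp m (a b : 'rV[R]_m) : R := \sum_i a 0 i * b 0 i.
Definition sqnorm m (a : 'rV[R]_m) : R := \sum_i a 0 i ^+ 2.

(** J = [I_{d-1}  -1] (a (d-1) x d matrix), e_d, and vbar = e_d + J^T v *)
Definition Jmx : 'M[R]_(d.-1, d) :=
  \matrix_(i, j) (if (j : nat) == i then 1
                  else if (j : nat) == d.-1 then -1 else 0).
Definition e_last : 'rV[R]_d := \row_j (if (j : nat) == d.-1 then 1 else 0).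
Definition vbar (v : 'rV[R]_d.-1) : 'rV[R]_d := e_last + v *m Jmx.

Variables (eta beta T : R) (r : nat -> 'rV[R]_d).

Definition eta_i (rho : 'rV[R]_d) (i : 'I_d) : R :=
  eta * expR (ln (rho 0 i / d%:R) / ln T).

Definition Psi (rho : 'rV[R]_d) (x : 'rV[R]_d.-1) : R :=
  - \sum_i ln (vbar x 0 i) / eta_i rho i.

Definition Phi (rho : 'rV[R]_d) (g w : nat -> 'rV[R]_d.-1) (t : nat)
  (x : 'rV[R]_d.-1) : R :=
  Psi rho x + beta * d%:R / 8 * sqnorm x
  + beta / 8 * \sum_(1 <= s < t.+1) (dotp (g s) (x - w s)) ^+ 2.

(** state after k rounds: (w, rho, g); w_s valid for 1 <= s <= k+1,
    rho_s for 0 <= s <= k, g_s for 1 <= s <= k *)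
Fixpoint dons (k : nat) :
  (nat -> 'rV[R]_d.-1) * (nat -> 'rV[R]_d) * (nat -> 'rV[R]_d.-1) :=
  match k with
  | 0 => (fun _ => const_mx (d%:R)^-1, fun _ => const_mx d%:R, fun _ => 0)
  | k'.+1 =>
    let '(w, rho, g) := dons k' in
    let t := k'.+1 in
    let u := (1 - T^-1) *: w t + (d%:R * T)^-1 *: const_mx 1 in
    let ub := vbar u in
    let gt := (dotp (r t) ub)^-1 *: (r t *m Jmx^T) in
    let rhot := \row_i (if 2 * rho k' 0 i < (ub 0 i)^-1 then (ub 0 i)^-1
                        else rho k' 0 i) in
    let rho' := fun s => if s == t then rhot else rho s in
    let g' := fun s => if s == t then gt else g s in
    let Phit := Phi (rho' t) g' w t in
    let nab := grad Phit (w t)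
       + \sum_(1 <= s < t.+1)
           (g' s - grad (Psi (rho' s)) (w s) + grad (Psi (rho' s.-1)) (w s)) in
    let Hinv := invmx (hess Phit (w t)) in
    let nrm := anorm Hinv nab in
    let wnext := w t - (1 + 4 * Num.sqrt (expR 1 * eta) * nrm)^-1 *: (nab *m Hinv) in
    let w' := fun s => if s == t.+1 then wnext else w s in
    (w', rho', g')
  end.

Definition dons_Phi (t : nat) : 'rV[R]_d.-1 -> R :=
  let '(w, rho, g) := dons t in Phi (rho t) g w t.

End DONS.

(* Main.v *)
Require Import Defs.
From HB Require Import structures.
From mathcomp Require Import all_boot all_order all_algebra.
From mathcomp Require Import all_classical all_reals all_analysis.
From mathcomp Require Import ring lra zify.
Set Implicit Arguments. Unset Strict Implicit. Unset Printing Implicit Defensive.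
Import Order.TTheory GRing.Theory Num.Theory.
Import numFieldNormedType.Exports.
Local Open Scope classical_set_scope.
Local Open Scope ring_scope.
Lemma aff1_derive (R : realType) (a L x : R) : is_derive x 1 (fun h : R => a + h * L) L.
Proof.
have -> : (fun h : R => a + h * L) = cst a + (fun h => L *: h) by apply/funext => h /=; rewrite mulrC.
apply: is_derive_eq.
by rewrite add0r /GRing.scale /= mulr1.
Qed.

Section Calc.
Variables (R : realType) (m : nat).
Local Notation V := 'rV[R]_m.

Lemma line_fun (f : V -> R) y v :
  (fun h : R => h^-1 *: ((f \o shift y) (h *: v) - f y)) =
  (fun h : R => h^-1 *: (((fun t : R => f (t *: v + y)) \o shift 0) (h *: 1) -
     (fun t : R => f (t *: v + y)) 0)).
Proof.
by apply/funext => h /=; rewrite scale0r add0r addr0 /GRing.scale /= mulr1.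
Qed.

Lemma line_derivable (f : V -> R) y v :
  derivable f y v <-> derivable (fun t : R => f (t *: v + y)) 0 1.
Proof. by rewrite /derivable line_fun. Qed.

Lemma line_derive (f : V -> R) y v :
  derive f y v = derive (fun t : R => f (t *: v + y)) 0 1.
Proof. by rewrite /derive line_fun. Qed.

Lemma term_derive (phi : R -> R) phi' L (A : V -> R) y v :
  (forall h, A (h *: v + y) = A y + h * L) ->
  is_derive (A y) 1 phi phi' -> is_derive y v (fun x => phi (A x)) (L * phi').
Proof.
move=> HA Hphi.
pose k := fun h : R => A y + h * L.
have Hk : is_derive (0:R) 1 k L by apply: aff1_derive.
have E : (fun t : R => phi (A (t *: v + y))) = phi \o k.
  by apply/funext => t /=; rewrite HA.
have dk : derivable k 0 1 by case: Hk.
have dphi : derivable phi (k 0) 1 by rewrite /k mul0r addr0; case: Hphi.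
split.
  apply/line_derivable; rewrite E.
  apply/derivable1_diffP; apply: differentiable_comp; exact/derivable1_diffP.
rewrite line_derive E -derive1E derive1_comp // !derive1E.
have [_ ->] := Hk. rewrite /k mul0r addr0. have [_ ->] := Hphi. by rewrite mulrC.
Qed.
End Calc.
Section Good.
Variables (R : realType) (m : nat).
Local Notation V := 'rV[R]_m.
Variable U : set V.
Hypothesis oU : open U.

Definition hasD (f : V -> R) (f' : 'I_m -> V -> R) :=
  forall y, U y -> forall j, derivable f y (evec R j) /\ partial j f y = f' j y.
Definition cont_on (f : V -> R) := forall y, U y -> {for y, continuous f}.

Definition good f f1 f2 f3 :=
  [/\ hasD f f1, forall i, hasD (f1 i) (f2 i), forall i j, hasD (f2 i j) (f3 i j)
    & [/\ cont_on f, forall i, cont_on (f1 i), forall i j, cont_on (f2 i j)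
        & forall i j k, cont_on (f3 i j k)]].

Lemma near_U y (f g : V -> R) : U y -> (forall z, U z -> f z = g z) ->
  \forall z \near y, f z = g z.
Proof.
move=> Uy E; have : nbhs y U by apply: open_nbhs_nbhs.
by apply: filterS => z Uz; apply: E.
Qed.

Lemma hasD_loc f g g' : hasD g g' -> (forall z, U z -> f z = g z) -> hasD f g'.
Proof.
move=> H E y Uy j; have [dg eg] := H y Uy j.
have N := near_U Uy E.
split.
  apply: near_eq_derivable dg; near=> z; by rewrite (near N z).
by rewrite /partial (near_eq_derive _ N).
Unshelve. all: by end_near.
Qed.

Lemma cont_loc f g : cont_on g -> (forall z, U z -> f z = g z) -> cont_on f.
Proof.
move=> H E y Uy; have N : {near y, g =1 f}.
  by have N := near_U Uy E; near=> z; rewrite (near N z).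
have Hg := H y Uy; move: Hg; rewrite /prop_for /continuous_at -(E y Uy) => Hg.
apply: cvg_trans Hg; exact: near_eq_cvg N.
Unshelve. all: by end_near.
Qed.

Lemma good_C3 f f1 f2 f3 : good f f1 f2 f3 ->
  [/\ C3_on U f, (forall i y, U y -> partial i f y = f1 i y),
      (forall i j y, U y -> partial j (partial i f) y = f2 i j y)
    & (forall i j k y, U y -> partial k (partial j (partial i f)) y = f3 i j k y)].
Proof.
move=> [h1 h2 h3 [c0 c1 c2 c3]].
have E1 : forall i y, U y -> partial i f y = f1 i y by move=> i y Uy; case: (h1 y Uy i).
have P1 : forall i, hasD (partial i f) (f2 i) by move=> i; apply: hasD_loc (h2 i) (E1 i).
have E2 : forall i j y, U y -> partial j (partial i f) y = f2 i j y
  by move=> i j y Uy; case: (P1 i y Uy j).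
have P2 : forall i j, hasD (partial j (partial i f)) (f3 i j)
  by move=> i j; apply: hasD_loc (h3 i j) (E2 i j).
have E3 : forall i j k y, U y -> partial k (partial j (partial i f)) y = f3 i j k y
  by move=> i j k y Uy; case: (P2 i j y Uy k).
split => //.
split; first exact: c0.
split; first by move=> i y Uy; case: (h1 y Uy i).
split; first by move=> i; apply: cont_loc (c1 i) (E1 i).
split; first by move=> i j y Uy; case: (P1 i y Uy j).
split; first by move=> i j; apply: cont_loc (c2 i j) (E2 i j).
split; first by move=> i j k y Uy; case: (P2 i j y Uy k).
by move=> i j k; apply: cont_loc (c3 i j k) (E3 i j k).
Qed.

Lemma good_ext f g f1 f2 f3 : (forall x, f x = g x) -> good g f1 f2 f3 -> good f f1 f2 f3.
Proof. by move=> E; have -> : f = g by apply/funext. Qed.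

Lemma hasD_add f g f' g' : hasD f f' -> hasD g g' ->
  hasD (fun x => f x + g x) (fun j x => f' j x + g' j x).
Proof.
move=> Hf Hg y Uy j; have [df ef] := Hf y Uy j; have [dg eg] := Hg y Uy j.
have -> : (fun x => f x + g x) = (f + g) by [].
by split; [apply: derivableD | rewrite /partial deriveD // -ef -eg].
Qed.

Lemma cont_add f g : cont_on f -> cont_on g -> cont_on (fun x => f x + g x).
Proof. by move=> Hf Hg y Uy; exact: (cvgD (Hf y Uy) (Hg y Uy)). Qed.

Lemma good_add f f1 f2 f3 g g1 g2 g3 : good f f1 f2 f3 -> good g g1 g2 g3 ->
  good (fun x => f x + g x) (fun i x => f1 i x + g1 i x)
    (fun i j x => f2 i j x + g2 i j x) (fun i j k x => f3 i j k x + g3 i j k x).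
Proof.
move=> [a1 a2 a3 [b0 b1 b2 b3]] [a1' a2' a3' [b0' b1' b2' b3']].
split; [exact: hasD_add | move=> i; exact: hasD_add | move=> i j; exact: hasD_add |].
split; [exact: cont_add | move=> i; exact: cont_add | move=> i j; exact: cont_add |
  move=> i j k; exact: cont_add].
Qed.

Lemma good_cst (c : R) : good (fun _ => c) (fun _ _ => 0) (fun _ _ _ => 0) (fun _ _ _ _ => 0).
Proof.
have hc : forall c' : R, hasD (fun _ => c') (fun _ _ => 0).
  move=> c' y _ j. have := is_derive_cst c' y (evec R j). move=> [d e]; split; [exact: d | exact: e].
have cc : forall c' : R, cont_on (fun _ => c') by move=> c' y _; apply: cst_continuous.
split; [exact: hc | by move=> i; exact: hc | by move=> i j; exact: hc |].
split; [exact: cc | by move=> i; exact: cc | by move=> i j; exact: cc | by move=> i j k; exact: cc].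
Qed.

Lemma good_sum (I : Type) (r : seq I) F F1 F2 F3 :
  (forall i, good (F i) (F1 i) (F2 i) (F3 i)) ->
  good (fun x => \sum_(i <- r) F i x) (fun a x => \sum_(i <- r) F1 i a x)
    (fun a b x => \sum_(i <- r) F2 i a b x) (fun a b c x => \sum_(i <- r) F3 i a b c x).
Proof.
move=> H; elim: r => [|i r IH].
  apply: (good_ext (g := fun _ => 0)); first by move=> x; rewrite big_nil.
  have -> : (fun a (x : V) => \sum_(i <- [::]) F1 i a x) = (fun _ _ => 0).
    by apply/funext => a; apply/funext => x; rewrite big_nil.
  have -> : (fun a b (x : V) => \sum_(i <- [::]) F2 i a b x) = (fun _ _ _ => 0).
    by do 2 (apply/funext => ?); apply/funext => x; rewrite big_nil.
  have -> : (fun a b c (x : V) => \sum_(i <- [::]) F3 i a b c x) = (fun _ _ _ _ => 0).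
    by do 3 (apply/funext => ?); apply/funext => x; rewrite big_nil.
  exact: good_cst.
have -> : (fun x => \sum_(j <- i :: r) F j x) = (fun x => F i x + \sum_(j <- r) F j x).
  by apply/funext => x; rewrite big_cons.
have -> : (fun a (x : V) => \sum_(j <- i :: r) F1 j a x) = (fun a x => F1 i a x + \sum_(j <- r) F1 j a x).
  by do 1 (apply/funext => ?); apply/funext => x; rewrite big_cons.
have -> : (fun a b (x : V) => \sum_(j <- i :: r) F2 j a b x) = (fun a b x => F2 i a b x + \sum_(j <- r) F2 j a b x).
  by do 2 (apply/funext => ?); apply/funext => x; rewrite big_cons.
have -> : (fun a b c (x : V) => \sum_(j <- i :: r) F3 j a b c x) = (fun a b c x => F3 i a b c x + \sum_(j <- r) F3 j a b c x).
  by do 3 (apply/funext => ?); apply/funext => x; rewrite big_cons.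
exact: good_add.
Qed.

End Good.
Lemma is_deriveK (R : realType) (psi : R -> R) (z d K : R) :
  is_derive z (1:R) psi d -> is_derive z (1:R) (fun t => K * psi t) (K * d).
Proof. move=> H; exact: is_deriveZ. Qed.

Section Aff.
Variables (R : realType) (m : nat).
Local Notation V := 'rV[R]_m.

Definition aff (c : 'I_m -> R) (b : R) (y : V) : R := \sum_j c j * y 0 j + b.

Lemma aff_line c b h v y : aff c b (h *: v + y) = aff c b y + h * aff c 0 v.
Proof.
rewrite /aff addr0 mulr_sumr addrAC -big_split /=; congr (_ + _).
by apply: eq_bigr => j _; rewrite !mxE; ring.
Qed.

Lemma aff_evec c j : aff c 0 (evec R j) = c j.
Proof.
rewrite /aff addr0 (bigD1 j) //= big1 ?addr0.
  by rewrite /evec mxE !eqxx mulr1.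
by move=> k /negbTE kj; rewrite /evec mxE kj andbF mulr0.
Qed.

Lemma cont_sum (I : Type) (r : seq I) (F : I -> V -> R) y :
  (forall i, {for y, continuous (F i)}) -> {for y, continuous (fun x => \sum_(i <- r) F i x)}.
Proof.
move=> H; elim: r => [|i r IH].
  have -> : (fun x : V => \sum_(i <- [::]) F i x) = (fun _ => 0) by apply/funext => x; rewrite big_nil.
  exact: cst_continuous.
have -> : (fun x : V => \sum_(j <- i :: r) F j x) = (fun x => F i x + \sum_(j <- r) F j x).
  by apply/funext => x; rewrite big_cons.
exact: (cvgD (H i) IH).
Qed.

Lemma aff_cont c b : continuous (aff c b).
Proof.
move=> y; rewrite /aff.
have H : {for y, continuous (fun x : V => \sum_j c j * x 0 j)}.
  apply: (@cont_sum _ (index_enum 'I_m) (fun j x => c j * x 0 j)) => j.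
  exact: (cvgM (cvg_cst (c j)) (@coord_continuous R 1 m 0 j y)).
exact: (cvgD H (cvg_cst b)).
Qed.

Variable U : set V.
Variables (c : 'I_m -> R) (b : R) (D : set R).
Hypothesis HU : forall y, U y -> D (aff c b y).

Lemma hasD_aff (psi psi' : R -> R) (f' : 'I_m -> V -> R) :
  (forall z, D z -> is_derive z 1 psi (psi' z)) ->
  (forall j x, f' j x = c j * psi' (aff c b x)) ->
  hasD U (fun x => psi (aff c b x)) f'.
Proof.
move=> Hd Ef y Uy j.
have [dd ee] := term_derive (v := evec R j) (fun h => aff_line c b h (evec R j) y) (Hd _ (HU Uy)).
by split => //; rewrite /partial ee Ef aff_evec.
Qed.

Lemma cont_aff (psi psi' : R -> R) :
  (forall z, D z -> is_derive z 1 psi (psi' z)) ->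
  cont_on U (fun x => psi (aff c b x)).
Proof.
move=> Hd y Uy.
have [dd _] := Hd _ (HU Uy).
have cpsi : {for aff c b y, continuous psi}.
  by apply: differentiable_continuous; apply/derivable1_diffP.
by have := continuous_comp (@aff_cont c b y) cpsi.
Qed.

Lemma good_term (p0 p1 p2 p3 p4 : R -> R) :
  (forall z, D z -> is_derive z 1 p0 (p1 z)) ->
  (forall z, D z -> is_derive z 1 p1 (p2 z)) ->
  (forall z, D z -> is_derive z 1 p2 (p3 z)) ->
  (forall z, D z -> is_derive z 1 p3 (p4 z)) ->
  good U (fun x => p0 (aff c b x)) (fun j x => c j * p1 (aff c b x))
    (fun j k x => c j * c k * p2 (aff c b x))
    (fun j k l x => c j * c k * c l * p3 (aff c b x)).
Proof.
move=> d0 d1 d2 d3.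
have K1 : forall K (p q : R -> R), (forall z, D z -> is_derive z 1 p (q z)) ->
    forall z, D z -> is_derive z 1 (fun t => K * p t) (K * q z).
  by move=> K p q H z Dz; apply: is_deriveK; apply: H.
split.
- by apply: (hasD_aff d0).
- move=> j; apply: (hasD_aff (K1 (c j) _ _ d1)) => k x; ring.
- move=> j k; apply: (hasD_aff (K1 (c j * c k) _ _ d2)) => l x; ring.
split.
- exact: (cont_aff d0).
- move=> j; exact: (cont_aff (K1 (c j) _ _ d1)).
- move=> j k; exact: (cont_aff (K1 (c j * c k) _ _ d2)).
- move=> j k l; exact: (cont_aff (K1 (c j * c k * c l) _ _ d3)).
Qed.

End Aff.
Section Forms.
Variables (R : realType) (m : nat).
Local Notation V := 'rV[R]_m.

Definition qf (M : 'I_m -> 'I_m -> R) (u : V) := \sum_i \sum_j M i j * u 0 i * u 0 j.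
Definition cf (M : 'I_m -> 'I_m -> 'I_m -> R) (u : V) :=
  \sum_i \sum_j \sum_k M i j k * u 0 i * u 0 j * u 0 k.

Lemma qf_add A B u : qf (fun i j => A i j + B i j) u = qf A u + qf B u.
Proof.
rewrite /qf -big_split; apply: eq_bigr => i _; rewrite -big_split; apply: eq_bigr => j _.
by rewrite !mulrDl.
Qed.

Lemma cf_add A B u : cf (fun i j k => A i j k + B i j k) u = cf A u + cf B u.
Proof.
rewrite /cf -big_split; apply: eq_bigr => i _; rewrite -big_split; apply: eq_bigr => j _.
rewrite -big_split; apply: eq_bigr => k _.
by rewrite !mulrDl.
Qed.

Lemma qf_sum (I : Type) (r : seq I) (G : I -> 'I_m -> 'I_m -> R) u :
  qf (fun i j => \sum_(t <- r) G t i j) u = \sum_(t <- r) qf (G t) u.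
Proof.
elim: r => [|t r IH].
  rewrite big_nil /qf big1 // => i _; rewrite big1 // => j _; by rewrite big_nil !mul0r.
rewrite big_cons -IH -qf_add; congr qf; apply/funext => i; apply/funext => j.
by rewrite big_cons.
Qed.

Lemma cf_sum (I : Type) (r : seq I) (G : I -> 'I_m -> 'I_m -> 'I_m -> R) u :
  cf (fun i j k => \sum_(t <- r) G t i j k) u = \sum_(t <- r) cf (G t) u.
Proof.
elim: r => [|t r IH].
  rewrite big_nil /cf big1 // => i _; rewrite big1 // => j _; rewrite big1 // => k _.
  by rewrite big_nil !mul0r.
rewrite big_cons -IH -cf_add; congr cf; apply/funext => i; apply/funext => j; apply/funext => k.
by rewrite big_cons.
Qed.

Lemma qf_term (c : 'I_m -> R) (W : R) u :
  qf (fun i j => c i * c j * W) u = W * (aff c 0 u) ^+ 2.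
Proof.
rewrite /qf /aff addr0 expr2 big_distrl /= mulr_sumr; apply: eq_bigr => i _.
rewrite big_distrr /= mulr_sumr; apply: eq_bigr => j _; ring.
Qed.

Lemma cf_term (c : 'I_m -> R) (W : R) u :
  cf (fun i j k => c i * c j * c k * W) u = W * (aff c 0 u) ^+ 3.
Proof.
rewrite /cf /aff addr0 2!exprS expr1 big_distrl /= mulr_sumr; apply: eq_bigr => i _.
rewrite big_distrl /= big_distrr /= mulr_sumr; apply: eq_bigr => j _.
rewrite big_distrr /= big_distrr /= mulr_sumr; apply: eq_bigr => k _; ring.
Qed.

Lemma quad_mx (H : 'M[R]_m) (u : V) : (u *m H *m u^T) 0 0 = qf (fun i j => H i j) u.
Proof.
rewrite /qf mxE exchange_big /=; apply: eq_bigr => i _.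
rewrite !mxE big_distrl /=; apply: eq_bigr => j _; ring.
Qed.

End Forms.
Lemma ln_conc (R : realType) (l a b : R) : 0 <= l -> l <= 1 -> 0 < a -> 0 < b ->
  l * ln a + (1 - l) * ln b <= ln (l * a + (1 - l) * b).
Proof.
move=> l0 l1 a0 b0.
have := @concave_ln R (Itv01 l0 l1) a b a0 b0.
by rewrite !convRE /=.
Qed.

Section Cvx.
Variables (R : realType) (m : nat).
Local Notation V := 'rV[R]_m.
Variable U : set V.

Definition cvx (f : V -> R) := forall x y (l : R), U x -> U y -> 0 <= l <= 1 ->
  f (l *: x + (1 - l) *: y) <= l * f x + (1 - l) * f y.

Lemma cvx_add f g : cvx f -> cvx g -> cvx (fun x => f x + g x).
Proof.
move=> Hf Hg x y l Ux Uy Hl.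
have := Hf x y l Ux Uy Hl; have := Hg x y l Ux Uy Hl.
move=> h1 h2; apply: le_trans (lerD h2 h1) _; rewrite le_eqVlt; apply/orP; left; apply/eqP; ring.
Qed.

Lemma cvx_sum (I : Type) (r : seq I) (F : I -> V -> R) :
  (forall i, cvx (F i)) -> cvx (fun x => \sum_(i <- r) F i x).
Proof.
move=> H; elim: r => [|i r IH].
  move=> x y l _ _ _; rewrite !big_nil; rewrite le_eqVlt; apply/orP; left; apply/eqP; ring.
have -> : (fun x => \sum_(j <- i :: r) F j x) = (fun x => F i x + \sum_(j <- r) F j x).
  by apply/funext => x; rewrite big_cons.
exact: cvx_add.
Qed.

Lemma aff_comb c b (x y : V) l : aff c b (l *: x + (1 - l) *: y) = l * aff c b x + (1 - l) * aff c b y.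
Proof.
have E : \sum_j c j * (l *: x + (1 - l) *: y) 0 j =
    l * \sum_j c j * x 0 j + (1 - l) * \sum_j c j * y 0 j.
  by rewrite !mulr_sumr -big_split /=; apply: eq_bigr => j _; rewrite !mxE; ring.
rewrite /aff E; ring.
Qed.

Lemma cvx_term (c : 'I_m -> R) (b : R) (D : set R) (p : R -> R) :
  (forall y, U y -> D (aff c b y)) ->
  (forall z1 z2 l, D z1 -> D z2 -> 0 <= l <= 1 -> p (l * z1 + (1 - l) * z2) <= l * p z1 + (1 - l) * p z2) ->
  cvx (fun x => p (aff c b x)).
Proof.
move=> HU Hp x y l Ux Uy Hl; rewrite aff_comb; exact: Hp (HU _ Ux) (HU _ Uy) Hl.
Qed.

End Cvx.
Section D1.
Variable R : realType.
Lemma dinv (z : R) : z != 0 -> is_derive z (1:R) (fun t : R => t^-1) (- (z^-1)^+2).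
Proof.
move=> z0.
have d1 : derivable (fun t : R => t) z 1 by [].
split.
  exact: (derivableV z0 d1).
rewrite (deriveV z0 d1) derive_id /GRing.scale /= mulr1 expr2 exprVn; by [].
Qed.
Lemma dinvX (k : nat) (z : R) : z != 0 ->
  is_derive z (1:R) (fun t : R => (t^-1)^+k) (- k%:R * (z^-1)^+k.+1).
Proof.
move=> z0; have H := is_deriveX k (dinv z0).
have E : (fun t : R => t^-1) ^+ k = (fun t : R => (t^-1)^+k).
  by apply/funext => t; rewrite exprfctE.
rewrite E in H; apply: is_derive_eq H _.
case: k {E} => [|k]; first by rewrite /GRing.scale /=; ring.
rewrite /GRing.scale /= !exprS /=. ring.
Qed.
End D1.

Section Conc.
Variables (R : realType) (n : nat) (eta beta T : R) (rho : 'rV[R]_n.+2)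
  (g w : nat -> 'rV[R]_n.+1) (t : nat).
Local Notation V := 'rV[R]_n.+1.

Definition cJ (i : 'I_n.+2) : 'I_n.+1 -> R := fun j => Jmx R n.+2 j i.
Definition bJ (i : 'I_n.+2) : R := e_last R n.+2 0 i.
Definition ed (j : 'I_n.+1) : 'I_n.+1 -> R := fun k => (k == j)%:R.
Definition cg s : 'I_n.+1 -> R := fun k => g s 0 k.
Definition bg s : R := - dotp (g s) (w s).
Definition ei i := eta_i eta T rho i.
Definition K1 := beta * (n.+2)%:R / 8.
Definition K2 := beta / 8.
Definition Ud : set V := [set x | forall i, 0 < @vbar R n.+2 x 0 i].

Definition q0 (e z : R) := -(e^-1) * ln z.
Definition q1 (e z : R) := -(e^-1) * z^-1.
Definition q2 (e z : R) := e^-1 * (z^-1)^+2.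
Definition q3 (e z : R) := -(2 * e^-1) * (z^-1)^+3.
Definition q4 (e z : R) := 6 * e^-1 * (z^-1)^+4.
Definition s0 (K z : R) := K * z^+2.
Definition s1 (K z : R) := K * (2 * z).
Definition s2 (K z : R) := K * 2.
Definition s3 (K z : R) : R := 0.

Lemma vbar_aff x i : @vbar R n.+2 x 0 i = aff (cJ i) (bJ i) x.
Proof.
rewrite /vbar /aff /bJ /cJ !mxE [in LHS]addrC; congr (_ + _); apply: eq_bigr => j _; by rewrite mulrC.
Qed.

Lemma aff_ed j x : aff (ed j) 0 x = x 0 j.
Proof.
rewrite /aff addr0 (bigD1 j) //= big1 ?addr0; first by rewrite /ed eqxx mul1r.
by move=> k /negbTE kj; rewrite /ed kj mul0r.
Qed.

Lemma aff_cg s x : aff (cg s) (bg s) x = dotp (g s) (x - w s).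
Proof.
rewrite /aff /bg /dotp /cg -sumrN -big_split /=; apply: eq_bigr => j _; rewrite !mxE; ring.
Qed.

Definition F x :=
  \sum_(i <- index_enum 'I_n.+2) q0 (ei i) (aff (cJ i) (bJ i) x) +
  (\sum_(j <- index_enum 'I_n.+1) s0 K1 (aff (ed j) 0 x) +
   \sum_(s <- iota 1 t) s0 K2 (aff (cg s) (bg s) x)).

Lemma Phi_eq x : Phi eta beta T rho g w t x = F x.
Proof.
rewrite /Phi /F /Psi addrA; congr (_ + _ + _).
- rewrite -sumrN; apply: eq_bigr => i _; rewrite vbar_aff /q0 /ei; ring.
- rewrite /sqnorm /K1 mulr_sumr; apply: eq_bigr => j _; by rewrite /s0 aff_ed.
- rewrite /K2 mulr_sumr /index_iota subSS subn0; apply: eq_bigr => s _; by rewrite /s0 aff_cg.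
Qed.


Lemma dq0 (e z : R) : 0 < z -> is_derive z (1:R) (q0 e) (q1 e z).
Proof. by move=> z0; have := is_deriveK (-(e^-1)) (is_derive1_ln z0). Qed.
Lemma dq1 (e z : R) : 0 < z -> is_derive z (1:R) (q1 e) (q2 e z).
Proof.
move=> z0; have := is_deriveK (-(e^-1)) (dinv (lt0r_neq0 z0)) => H.
apply: is_derive_eq H _; rewrite /q2; ring.
Qed.
Lemma dq2 (e z : R) : 0 < z -> is_derive z (1:R) (q2 e) (q3 e z).
Proof.
move=> z0; have := is_deriveK (e^-1) (dinvX 2 (lt0r_neq0 z0)) => H.
apply: is_derive_eq H _; rewrite /q3; ring.
Qed.
Lemma dq3 (e z : R) : 0 < z -> is_derive z (1:R) (q3 e) (q4 e z).
Proof.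
move=> z0; have := is_deriveK (-(2 * e^-1)) (dinvX 3 (lt0r_neq0 z0)) => H.
apply: is_derive_eq H _; rewrite /q4; ring.
Qed.
Lemma ds0 (K z : R) : is_derive z (1:R) (s0 K) (s1 K z).
Proof.
have H0 := is_deriveX 2 (is_derive_id z (1:R)).
have E : (@id R) ^+ 2 = (fun t : R => t^+2) by apply/funext => u; rewrite exprfctE.
rewrite E in H0; have := is_deriveK K H0 => H.
apply: is_derive_eq H _; rewrite /s1 /GRing.scale /=; ring.
Qed.
Lemma ds1 (K z : R) : is_derive z (1:R) (s1 K) (s2 K z).
Proof.
have H0 := is_deriveK 2 (is_derive_id z (1:R)).
have := is_deriveK K H0 => H.
apply: is_derive_eq H _; rewrite /s2; ring.
Qed.
Lemma ds2 (K z : R) : is_derive z (1:R) (s2 K) (s3 K z).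
Proof. exact: (is_derive_cst (K * 2) z 1). Qed.
Lemma ds3 (K z : R) : is_derive z (1:R) (s3 K) (s3 K z).
Proof. exact: (is_derive_cst 0 z 1). Qed.

Definition F1 a x :=
  \sum_(i <- index_enum 'I_n.+2) cJ i a * q1 (ei i) (aff (cJ i) (bJ i) x) +
  (\sum_(j <- index_enum 'I_n.+1) ed j a * s1 K1 (aff (ed j) 0 x) +
   \sum_(s <- iota 1 t) cg s a * s1 K2 (aff (cg s) (bg s) x)).
Definition F2 a b x :=
  \sum_(i <- index_enum 'I_n.+2) cJ i a * cJ i b * q2 (ei i) (aff (cJ i) (bJ i) x) +
  (\sum_(j <- index_enum 'I_n.+1) ed j a * ed j b * s2 K1 (aff (ed j) 0 x) +
   \sum_(s <- iota 1 t) cg s a * cg s b * s2 K2 (aff (cg s) (bg s) x)).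
Definition F3 a b c x :=
  \sum_(i <- index_enum 'I_n.+2) cJ i a * cJ i b * cJ i c * q3 (ei i) (aff (cJ i) (bJ i) x) +
  (\sum_(j <- index_enum 'I_n.+1) ed j a * ed j b * ed j c * s3 K1 (aff (ed j) 0 x) +
   \sum_(s <- iota 1 t) cg s a * cg s b * cg s c * s3 K2 (aff (cg s) (bg s) x)).

Lemma goodF : good Ud F F1 F2 F3.
Proof.
apply: good_add; last apply: good_add.
- apply: good_sum => i; apply: (@good_term _ _ Ud _ _ [set z | 0 < z]);
    [by move=> y Uy /=; rewrite -vbar_aff; apply: Uy| exact: dq0|exact: dq1|exact: dq2|exact: dq3].
- apply: good_sum => j; apply: (@good_term _ _ Ud _ _ [set: R] _ (s0 K1) (s1 K1) (s2 K1) (s3 K1) (s3 K1));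
    try done; move=> *; first [exact: ds0|exact: ds1|exact: ds2|exact: ds3].
- apply: good_sum => j; apply: (@good_term _ _ Ud _ _ [set: R] _ (s0 K2) (s1 K2) (s2 K2) (s3 K2) (s3 K2));
    try done; move=> *; first [exact: ds0|exact: ds1|exact: ds2|exact: ds3].
Qed.

End Conc.

Section Topo.
Variables (R : realType) (n : nat).
Local Notation V := 'rV[R]_n.+1.

Lemma vbar_lt (j : 'I_n.+1) (x : V) : @vbar R n.+2 x 0 (widen_ord (leqnSn _) j) = x 0 j.
Proof.
rewrite /vbar /e_last /Jmx !mxE /= (ltn_eqF (ltn_ord j)) add0r (bigD1 j) //= !mxE eqxx mulr1 big1 ?addr0 //.
move=> k kj; rewrite !mxE; have -> : (nat_of_ord j == k) = false.
  by apply/negbTE; rewrite eq_sym; apply: kj.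
by rewrite (ltn_eqF (ltn_ord j)) mulr0.
Qed.

Lemma vbar_last (x : V) : @vbar R n.+2 x 0 ord_max = 1 - \sum_j x 0 j.
Proof.
rewrite /vbar /e_last /Jmx !mxE /= eqxx -sumrN; congr (_ + _); apply: eq_bigr => k _; rewrite !mxE.
by rewrite (gtn_eqF (ltn_ord k)) eqxx mulrN1.
Qed.

Lemma ord_cases (i : 'I_n.+2) : (exists j : 'I_n.+1, i = widen_ord (leqnSn _) j) \/ i = ord_max.
Proof.
case: (ltnP i n.+1) => h; [left; exists (Ordinal h); exact: val_inj | right; apply: val_inj => /=].
by have := ltn_ord i; lia.
Qed.

Lemma vbar_sum (x : V) : \sum_i @vbar R n.+2 x 0 i = 1.
Proof.
rewrite big_ord_recr /= vbar_last.
under eq_bigr do rewrite vbar_lt.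
ring.
Qed.

Lemma Cset_vbar (x : V) : @Cset R n.+2 x <-> forall i, 0 <= @vbar R n.+2 x 0 i.
Proof.
split.
  move=> [H1 H2] i; case: (ord_cases i) => [[j ->]|->].
    by rewrite vbar_lt.
  by rewrite vbar_last subr_ge0.
move=> H; split.
  by move=> j; rewrite -vbar_lt.
by have := H ord_max; rewrite vbar_last subr_ge0.
Qed.

Lemma Ud_sub : @Ud R n `<=` @Cset R n.+2.
Proof. by move=> x Ux; apply/Cset_vbar => i; apply/ltW/Ux. Qed.

Lemma open_Ud : open (@Ud R n).
Proof.
rewrite openE => x Ux; rewrite /interior.
apply: (@filter_forall V 'I_n.+2 (fun i (y : V) => 0 < @vbar R n.+2 y 0 i) (nbhs x) _) => i.
have Hi := Ux i; rewrite vbar_aff in Hi.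
have := cvgr_gt _ (@aff_cont _ _ (@cJ R n i) (@bJ R n i) x) 0 Hi.
move=> H; near=> y; rewrite vbar_aff; near: y; exact: H.
Unshelve. all: by end_near.
Qed.

Lemma Ud_int : @Ud R n `<=` interior (@Cset R n.+2).
Proof.
move=> x Ux; rewrite /interior.
have : nbhs x (@Ud R n) by apply: open_nbhs_nbhs; split => //; exact: open_Ud.
by apply: filterS; apply: Ud_sub.
Qed.


Lemma cJ_nz (i : 'I_n.+2) : exists j, @cJ R n i j != 0.
Proof.
case: (ord_cases i) => [[j ->]|->].
  by exists j; rewrite /cJ /Jmx mxE /= eqxx oner_neq0.
by exists 0; rewrite /cJ /Jmx mxE /= eqxx oppr_eq0 oner_neq0.
Qed.

Lemma int_Ud : interior (@Cset R n.+2) `<=` @Ud R n.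
Proof.
move=> x Hx i.
have Cx : @Cset R n.+2 x by apply: interior_subset.
have ge0 := (Cset_vbar x).1 Cx i.
rewrite lt_neqAle ge0 andbT eq_sym; apply/negP => /eqP E0.
pose v : V := \row_j (- @cJ R n i j).
have Lneg : aff (@cJ R n i) 0 v < 0.
  have [j0 Hj0] := cJ_nz i.
  rewrite /aff addr0.
  have -> : \sum_j @cJ R n i j * v 0 j = - \sum_j (@cJ R n i j)^+2.
    rewrite -sumrN; apply: eq_bigr => j _; rewrite mxE; ring.
  rewrite oppr_lt0 (bigD1 j0) //=.
  apply: (@lt_le_trans _ _ (@cJ R n i j0 ^+2)).
    by rewrite lt0r sqrf_eq0 Hj0 sqr_ge0.
  by rewrite lerDl; apply: sumr_ge0 => j _; exact: sqr_ge0.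
have hc : (fun h : R => h *: v + x) @ 0 --> x.
  have H := cvgD (@scalel_continuous _ _ v 0) (cvg_cst x).
  rewrite scale0r add0r in H; exact: H.
have N := hc _ Hx.
move/nbhs_ballP: N => [e /= e0 He].
have Hh : ball (0:R) e (e / 2).
  rewrite -ball_normE /ball_ /= sub0r normrN ger0_norm; first lra.
  by rewrite divr_ge0 // ltW.
have := He _ Hh; rewrite /= => /Cset_vbar /(_ i).
rewrite vbar_aff aff_line -vbar_aff E0 add0r => H.
have : e / 2 * aff (@cJ R n i) 0 v < 0 by rewrite pmulr_rlt0 // divr_gt0.
by rewrite ltNge H.
Qed.

Lemma closed_Cset : closed (@Cset R n.+2).
Proof.
move=> x Hx; apply/Cset_vbar => i; rewrite vbar_aff.
rewrite leNgt; apply/negP => Hlt.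
have N : nbhs x [set y : V | aff (@cJ R n i) (@bJ R n i) y < 0].
  exact: (cvgr_lt _ (@aff_cont _ _ (@cJ R n i) (@bJ R n i) x) 0 Hlt).
have [y [Cy Ly]] := Hx _ N.
move: Cy => /Cset_vbar /(_ i); rewrite vbar_aff => H.
by move: Ly; rewrite /= ltNge H.
Qed.

Lemma compact_Cset : compact (@Cset R n.+2).
Proof.
have K := @rV_compact R n.+1 (fun _ : 'I_n.+1 => `[(0:R), 1]%classic) (fun _ => @segment_compact R 0 1).
apply: (subclosed_compact closed_Cset K).
move=> x [H1 H2] i /=.
rewrite in_itv /= H1 /=.
apply: le_trans H2.
rewrite (bigD1 i) //= lerDl; apply: sumr_ge0 => j _; exact: H1.
Qed.

Lemma convex_Cset : Defs.convex_set (@Cset R n.+2).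
Proof.
move=> x y l Cx Cy /andP[l0 l1]; apply/Cset_vbar => i.
rewrite vbar_aff aff_comb -!vbar_aff.
have hx := (Cset_vbar x).1 Cx i; have hy := (Cset_vbar y).1 Cy i.
apply: addr_ge0; apply: mulr_ge0 => //; lra.
Qed.

Lemma Ud_const : @Ud R n (const_mx (n.+2)%:R^-1).
Proof.
move=> i.
case: (ord_cases i) => [[j ->]|->].
  by rewrite vbar_lt mxE invr_gt0 ltr0Sn.
rewrite vbar_last.
under eq_bigr do rewrite mxE.
rewrite sumr_const card_ord subr_gt0 -(mulr_natl ((n.+2)%:R^-1) n.+1) ltr_pdivrMr ?ltr0Sn // mul1r ltr_nat.
exact: ltnSn.
Qed.

Lemma Ud_ne : exists x : V, @Ud R n x.
Proof. by exists (const_mx (n.+2)%:R^-1); apply: Ud_const. Qed.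

End Topo.


Lemma sc_ineq (R : realType) (I : finType) (a e z : I -> R) (E Q : R) :
  (forall i, 0 < a i) -> (forall i, 0 < e i) -> (forall i, e i <= E) ->
  \sum_i (e i)^-1 * (a i)^-1 ^+2 * (z i)^+2 <= Q ->
  `| \sum_i (-(2 * (e i)^-1)) * (a i)^-1 ^+3 * (z i)^+3 | <=
    2 * Num.sqrt E * (Num.sqrt Q) ^+ 3.
Proof.
move=> a0 e0 eE HQ.
pose P i := (e i)^-1 * (a i)^-1 ^+2 * (z i)^+2.
have Pge : forall i, 0 <= P i.
  move=> i; rewrite /P; apply: mulr_ge0; last exact: sqr_ge0.
  by apply: mulr_ge0; [rewrite invr_ge0 ltW | exact: sqr_ge0].
have Q0 : 0 <= Q by apply: le_trans HQ; apply: sumr_ge0 => i _; exact: Pge.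
have PleQ : forall i, P i <= Q.
  move=> i; apply: le_trans HQ; rewrite (bigD1 i) //= lerDl.
  by apply: sumr_ge0 => j _; exact: Pge.
set s := Num.sqrt Q.
have xi : forall i, `|z i| * (a i)^-1 <= Num.sqrt E * s.
  move=> i.
  have E0 : 0 <= E := le_trans (ltW (e0 i)) (eE i).
  have h1 : 0 <= `|z i| * (a i)^-1 by apply: mulr_ge0 => //; rewrite invr_ge0 ltW.
  rewrite -(ger0_norm h1) -sqrtr_sqr /s -sqrtrM // ler_sqrt; last by apply: mulr_ge0.
  have -> : (`|z i| * (a i)^-1) ^+ 2 = e i * P i.
    rewrite /P exprMn real_normK ?num_real //.
    have en : e i != 0 by rewrite gt_eqF.
    field; do ?split; apply/negP; rewrite gt_eqF //.
  apply: le_trans (ler_wpM2r (Pge i) (eE i)) _.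
  by apply: ler_wpM2l => //; apply: PleQ.
have ti : forall i, `|(-(2 * (e i)^-1)) * (a i)^-1 ^+3 * (z i)^+3| <= 2 * (Num.sqrt E * s) * P i.
  move=> i.
  have -> : `|(-(2 * (e i)^-1)) * (a i)^-1 ^+3 * (z i)^+3| = 2 * P i * (`|z i| * (a i)^-1).
    have hz : (z i) ^+ 2 = `|z i| ^+ 2 by rewrite real_normK ?num_real.
    have hai : `|(a i)^-1| = (a i)^-1 by rewrite ger0_norm // invr_ge0 ltW.
    have hei : `|(e i)^-1| = (e i)^-1 by rewrite ger0_norm // invr_ge0 ltW.
    rewrite /P hz !normrM normrN normrM hai hei [`|2|]ger0_norm //.
    have an : a i != 0 by rewrite gt_eqF.
    by field; rewrite an gt_eqF.
  rewrite [2 * (_ * s) * _]mulrAC.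
  apply: ler_wpM2l; first by apply: mulr_ge0.
  exact: xi.
apply: le_trans (ler_norm_sum _ _ _) _.
apply: le_trans (ler_sum _ (fun i _ => ti i)) _.
rewrite -mulr_sumr.
have -> : 2 * Num.sqrt E * s ^+ 3 = 2 * (Num.sqrt E * s) * (s ^+ 2) by ring.
rewrite sqr_sqrtr //.
apply: ler_wpM2l; first by apply: mulr_ge0 => //; apply: mulr_ge0; apply: sqrtr_ge0.
exact: HQ.
Qed.

Section Main.
Variables (R : realType) (n : nat) (eta beta T : R) (rho : 'rV[R]_n.+2)
  (g w : nat -> 'rV[R]_n.+1) (t : nat).
Local Notation V := 'rV[R]_n.+1.
Local Notation P := (Phi eta beta T rho g w t).
Local Notation F1 := (F1 eta beta T rho g w t).
Local Notation F2 := (F2 eta beta T rho g w t).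
Local Notation F3 := (F3 eta beta T rho g w t).
Local Notation Ud := (@Ud R n).

Lemma Pgood : good Ud P F1 F2 F3.
Proof. apply: good_ext (@Phi_eq R n eta beta T rho g w t) _; exact: goodF. Qed.

Lemma P_C3 : C3_on Ud P.
Proof. by case: (good_C3 (@open_Ud R n) Pgood). Qed.

Lemma hessE y : Ud y -> hess P y = \matrix_(i, j) F2 i j y.
Proof.
move=> Uy; case: (good_C3 (@open_Ud R n) Pgood) => _ _ E2 _.
by apply/matrixP => i j; rewrite !mxE E2.
Qed.

Lemma quadE y u : Ud y -> (u *m hess P y *m u^T) 0 0 =
  \sum_(i <- index_enum 'I_n.+2) q2 (ei eta T rho i) (aff (cJ R i) (bJ R i) y) * (aff (cJ R i) 0 u)^+2 +
  (\sum_(j <- index_enum 'I_n.+1) s2 (K1 n beta) (aff (ed R j) 0 y) * (aff (ed R j) 0 u)^+2 +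
   \sum_(s <- iota 1 t) s2 (K2 beta) (aff (cg g s) (bg g w s) y) * (aff (cg g s) 0 u)^+2).
Proof.
move=> Uy; rewrite quad_mx hessE //.
have -> : qf (fun i j => (\matrix_(i0, j0) F2 i0 j0 y) i j) u = qf (fun i j => F2 i j y) u.
  by congr qf; apply/funext => i; apply/funext => j; rewrite mxE.
rewrite /F2 qf_add qf_add !qf_sum.
congr (_ + (_ + _)); apply: eq_bigr => k _; by rewrite qf_term.
Qed.


Lemma D3E y u : Ud y -> D3 P y u =
  \sum_(i <- index_enum 'I_n.+2) q3 (ei eta T rho i) (aff (cJ R i) (bJ R i) y) * (aff (cJ R i) 0 u)^+3.
Proof.
move=> Uy; case: (good_C3 (@open_Ud R n) Pgood) => _ _ _ E3.
have -> : D3 P y u = cf (fun i j k => F3 i j k y) u.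
  rewrite /D3 /cf; apply: eq_bigr => i _; apply: eq_bigr => j _; apply: eq_bigr => k _.
  by rewrite E3.
rewrite /F3 cf_add cf_add !cf_sum.
rewrite [X in _ + (X + _)]big1 => [|j _]; last by rewrite cf_term /s3 mul0r.
rewrite [X in _ + (_ + X)]big1 => [|s _]; last by rewrite cf_term /s3 mul0r.
rewrite !addr0; apply: eq_bigr => i _; by rewrite cf_term.
Qed.

Hypotheses (eta0 : 0 < eta) (T1 : 1 < T) (beta0 : 0 < beta)
  (rhoB : forall i, rho 0 i <= (n.+2)%:R * T).

Lemma ei_pos i : 0 < ei eta T rho i.
Proof. by rewrite /ei /eta_i mulr_gt0 // expR_gt0. Qed.

Lemma ei_le i : ei eta T rho i <= eta * expR 1.
Proof.
rewrite /ei /eta_i ler_pM2l // ler_expR (ler_pdivrMr _ _ (ln_gt0 T1)) mul1r.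
case: (leP (rho 0 i / (n.+2)%:R) 0) => h.
  by rewrite (ln0 h) ltW // ln_gt0.
rewrite ler_ln ?posrE //; last by apply: lt_trans T1.
by rewrite ler_pdivrMr ?ltr0Sn // mulrC.
Qed.


Lemma int_eq : interior (@Cset R n.+2) = Ud.
Proof. by apply/seteqP; split; [apply: int_Ud | apply: Ud_int]. Qed.

Lemma P_D3 x u : Ud x ->
  `|D3 P x u| <= 2 * Num.sqrt (eta * expR 1) * (anorm (hess P x) u) ^+ 3.
Proof.
move=> Ux; rewrite D3E // /anorm quadE //.
apply: (sc_ineq (a := fun i => aff (cJ R i) (bJ R i) x) (e := fun i => ei eta T rho i)
  (z := fun i => aff (cJ R i) 0 u)).
- by move=> i; rewrite -vbar_aff; apply: Ux.
- exact: ei_pos.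
- exact: ei_le.
have hn : 0 <= (n.+2)%:R :> R := ler0n _ _.
have k1 : forall z, 0 <= s2 (K1 n beta) z.
  move=> z; rewrite /s2 /K1; apply: mulr_ge0; last exact: ler0n.
  apply: mulr_ge0; last by rewrite invr_ge0 ler0n.
  apply: mulr_ge0 => //; exact: ltW.
have k2 : forall z, 0 <= s2 (K2 beta) z.
  move=> z; rewrite /s2 /K2; apply: mulr_ge0; last exact: ler0n.
  apply: mulr_ge0; last by rewrite invr_ge0 ler0n.
  exact: ltW.
rewrite lerDl; apply: addr_ge0; apply: sumr_ge0 => j _; apply: mulr_ge0 => //; exact: sqr_ge0.
Qed.


Lemma P_cvx : cvx Ud P.
Proof.
have -> : P = F eta beta T rho g w t by apply/funext => x; exact: Phi_eq.
have hn : 0 <= (n.+2)%:R :> R := ler0n _ _.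
have sq : forall K, 0 <= K -> forall z1 z2 l, [set: R] z1 -> [set: R] z2 -> 0 <= l <= 1 ->
    s0 K (l * z1 + (1 - l) * z2) <= l * s0 K z1 + (1 - l) * s0 K z2.
  move=> K K0 z1 z2 l _ _ /andP[l0 l1]; rewrite /s0 -subr_ge0.
  have -> : l * (K * z1 ^+ 2) + (1 - l) * (K * z2 ^+ 2) - K * (l * z1 + (1 - l) * z2) ^+ 2 =
    K * (l * (1 - l)) * (z1 - z2) ^+ 2 by ring.
  apply: mulr_ge0; last exact: sqr_ge0.
  by apply: mulr_ge0 => //; apply: mulr_ge0 => //; lra.
apply: cvx_add; [|apply: cvx_add]; apply: cvx_sum => i.
- apply: (cvx_term (D := [set z | 0 < z])).
    by move=> y Uy /=; rewrite -vbar_aff; apply: Uy.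
  move=> z1 z2 l z10 z20 /andP[l0 l1]; rewrite /q0.
  have h := ln_conc l0 l1 z10 z20.
  have c0 : 0 < (ei eta T rho i)^-1 by rewrite invr_gt0 ei_pos.
  set c := (ei eta T rho i)^-1.
  have -> : l * (- c * ln z1) + (1 - l) * (- c * ln z2) = - c * (l * ln z1 + (1 - l) * ln z2) by ring.
  by apply: ler_wnM2l => //; rewrite oppr_le0 ltW.
- apply: (cvx_term (D := [set: R])) => //; apply: sq.
  rewrite /K1; apply: mulr_ge0; last by rewrite invr_ge0 ler0n.
  by apply: mulr_ge0 => //; exact: ltW.
- apply: (cvx_term (D := [set: R])) => //; apply: sq.
  by rewrite /K2; apply: mulr_ge0; [exact: ltW | by rewrite invr_ge0 ler0n].
Qed.

Lemma vbar_le1 y i : Ud y -> @vbar R n.+2 y 0 i <= 1.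
Proof.
move=> Uy; rewrite -(vbar_sum y) (bigD1 i) //= lerDl.
by apply: sumr_ge0 => j _; apply/ltW/Uy.
Qed.

Lemma P_lb y i : Ud y -> q0 (ei eta T rho i) (aff (cJ R i) (bJ R i) y) <= P y.
Proof.
move=> Uy; rewrite Phi_eq /F.
have hn : 0 <= (n.+2)%:R :> R := ler0n _ _.
apply: (@le_trans _ _ (\sum_(j <- index_enum 'I_n.+2) q0 (ei eta T rho j) (aff (cJ R j) (bJ R j) y))).
  rewrite (bigD1 i) //= lerDl; apply: sumr_ge0 => j _.
  rewrite /q0 mulNr -mulrN; apply: mulr_ge0; first by rewrite invr_ge0 ltW // ei_pos.
  by rewrite oppr_ge0 ln_le0 // -vbar_aff vbar_le1.
rewrite lerDl; apply: addr_ge0; apply: sumr_ge0 => j _; rewrite /s0; apply: mulr_ge0;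
  try exact: sqr_ge0.
- rewrite /K1; apply: mulr_ge0; last by rewrite invr_ge0 ler0n.
  by apply: mulr_ge0 => //; exact: ltW.
- by rewrite /K2; apply: mulr_ge0; [exact: ltW | by rewrite invr_ge0 ler0n].
Qed.

Lemma sc_P : self_concordant (@Cset R n.+2) P (Num.sqrt (eta * expR 1)).
Proof.
split; first exact: convex_Cset.
split; first exact: compact_Cset.
split; first by have [x Ux] := @Ud_ne R n; exists x; exact: Ud_int.
split; first exact: sqrtr_ge0.
split; first by rewrite int_eq; exact: P_cvx.
split; first by rewrite int_eq; exact: P_C3.
split; last by move=> x u Hx; apply: P_D3; rewrite -int_eq.
move=> xs x Hxs Hcv [Hcl Hni].
have Cx : @Cset R n.+2 x by apply: closed_Cset.
case: (pselect (forall i, 0 < @vbar R n.+2 x 0 i)) => [H|/existsNP [i Hi]].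
  by exfalso; apply: Hni; apply: Ud_int.
have ax : aff (cJ R i) (bJ R i) x = 0.
  rewrite -vbar_aff; apply/eqP; rewrite eq_le ((Cset_vbar x).1 Cx i) andbT leNgt.
  by apply/negP.
have Hxs' : forall k, Ud (xs k) by move=> k; rewrite -int_eq.
apply/cvgryPge => A.
set e := ei eta T rho i.
have cv : (fun k => aff (cJ R i) (bJ R i) (xs k)) @ \oo --> 0.
  have := cvg_comp _ _ Hcv (@aff_cont _ _ (cJ R i) (bJ R i) x).
  by rewrite ax.
have H := cvgr_lt _ cv (expR (- A * e)) (expR_gt0 _).
near=> k.
have Hk : aff (cJ R i) (bJ R i) (xs k) < expR (- A * e) by near: k; exact: H.
rewrite /=; apply: le_trans (P_lb i (Hxs' k)).
have ak : 0 < aff (cJ R i) (bJ R i) (xs k) by rewrite -vbar_aff; apply: Hxs'.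
have hl : ln (aff (cJ R i) (bJ R i) (xs k)) <= - A * e.
  by rewrite -ler_expR lnK ?posrE //; apply: ltW.
have e0 : 0 < e by apply: ei_pos.
have ec : e^-1 * e = 1 by rewrite mulVf // gt_eqF.
have c0 : 0 < e^-1 by rewrite invr_gt0.
rewrite /q0.
rewrite [X in X <= _](_ : A = - e^-1 * (- A * e)); last first.
  have en : e != 0 by rewrite gt_eqF. by field.
by apply: ler_wnM2l => //; rewrite oppr_le0 ltW.
Unshelve. all: by end_near.
Qed.

End Main.

Lemma qf_scale (R : realType) m (M : 'I_m -> 'I_m -> R) (s : R) (v : 'rV[R]_m) :
  qf M (s *: v) = s ^+ 2 * qf M v.
Proof.
rewrite /qf mulr_sumr; apply: eq_bigr => i _; rewrite mulr_sumr; apply: eq_bigr => j _.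
rewrite !mxE; ring.
Qed.

Section Newton.
Variables (R : realType) (n : nat) (eta beta T : R) (rho : 'rV[R]_n.+2)
  (g w : nat -> 'rV[R]_n.+1) (t : nat).
Local Notation V := 'rV[R]_n.+1.
Local Notation P := (Phi eta beta T rho g w t).
Local Notation Ud := (@Ud R n).
Hypotheses (eta0 : 0 < eta) (T1 : 1 < T) (beta0 : 0 < beta)
  (rhoB : forall i, rho 0 i <= (n.+2)%:R * T).

Let quad (y v : V) := (v *m hess P y *m v^T) 0 0.

Lemma quad_parts y v : Ud y ->
  [/\ forall i, (ei eta T rho i)^-1 * (aff (cJ R i) (bJ R i) y)^-1 ^+ 2 * (aff (cJ R i) 0 v) ^+ 2 <= quad y v,
      0 <= quad y v &
      2 * K1 n beta * \sum_j (v 0 j) ^+ 2 <= quad y v].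
Proof.
move=> Uy; rewrite /quad quadE //.
have hn : 0 <= (n.+2)%:R :> R := ler0n _ _.
have k1 : 0 <= K1 n beta.
  rewrite /K1; apply: mulr_ge0; last by rewrite invr_ge0 ler0n.
  by apply: mulr_ge0 => //; exact: ltW.
have k2 : 0 <= K2 beta by rewrite /K2; apply: mulr_ge0; [exact: ltW | by rewrite invr_ge0 ler0n].
have t1 : forall i, 0 <= q2 (ei eta T rho i) (aff (cJ R i) (bJ R i) y) * aff (cJ R i) 0 v ^+ 2.
  move=> i; rewrite /q2; apply: mulr_ge0; last exact: sqr_ge0.
  by apply: mulr_ge0; [rewrite invr_ge0 ltW // ei_pos | exact: sqr_ge0].
have t2 : 0 <= \sum_(j <- index_enum 'I_n.+1) s2 (K1 n beta) (aff (ed R j) 0 y) * aff (ed R j) 0 v ^+ 2.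
  by apply: sumr_ge0 => j _; apply: mulr_ge0; [rewrite /s2 mulr_ge0 | exact: sqr_ge0].
have t3 : 0 <= \sum_(s <- iota 1 t) s2 (K2 beta) (aff (cg g s) (bg g w s) y) * aff (cg g s) 0 v ^+ 2.
  by apply: sumr_ge0 => j _; apply: mulr_ge0; [rewrite /s2 mulr_ge0 | exact: sqr_ge0].
have t0 : 0 <= \sum_(i <- index_enum 'I_n.+2) q2 (ei eta T rho i) (aff (cJ R i) (bJ R i) y) * aff (cJ R i) 0 v ^+ 2.
  by apply: sumr_ge0 => i _; apply: t1.
split.
- move=> i; apply: (@le_trans _ _ (\sum_(i <- index_enum 'I_n.+2) q2 (ei eta T rho i) (aff (cJ R i) (bJ R i) y) * aff (cJ R i) 0 v ^+ 2)).
    rewrite (bigD1 i) //= -[X in X <= _]addr0 lerD //; last by apply: sumr_ge0 => j _; apply: t1.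
  by rewrite lerDl addr_ge0.
- by rewrite !addr_ge0.
- rewrite addrC -addrA.
  apply: (@le_trans _ _ (\sum_(j <- index_enum 'I_n.+1) s2 (K1 n beta) (aff (ed R j) 0 y) * aff (ed R j) 0 v ^+ 2)); last by rewrite lerDl addr_ge0.
  rewrite mulr_sumr; apply: ler_sum => j _.
  rewrite /s2 aff_ed le_eqVlt; apply/orP; left; apply/eqP; ring.
Qed.

Lemma hess_sym y : Ud y -> (hess P y)^T = hess P y.
Proof.
move=> Uy; rewrite hessE //; apply/matrixP => i j; rewrite !mxE /F2.
by congr (_ + (_ + _)); apply: eq_bigr => k _; ring.
Qed.

Lemma quad_pos y v : Ud y -> v != 0 -> 0 < quad y v.
Proof.
move=> Uy vn0; have [_ _ H] := quad_parts v Uy.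
apply: lt_le_trans H.
have hn : 0 < (n.+2)%:R :> R := ltr0Sn _ _.
have k1 : 0 < K1 n beta by rewrite /K1 mulr_gt0 // ?mulr_gt0 // invr_gt0 ltr0Sn.
have : ~~ [forall j, v 0 j == 0].
  apply/negP => /forallP Hv; move/negP: vn0; apply; apply/eqP/rowP => j.
  by rewrite mxE; apply/eqP/Hv.
case/forallPn => j Hj.
apply: mulr_gt0; first by rewrite mulr_gt0.
rewrite (bigD1 j) //=.
apply: (@lt_le_trans _ _ (v 0 j ^+ 2)); first by rewrite lt0r sqrf_eq0 Hj sqr_ge0.
by rewrite lerDl; apply: sumr_ge0 => k _; exact: sqr_ge0.
Qed.

Lemma H_unit y : Ud y -> hess P y \in unitmx.
Proof.
move=> Uy; rewrite unitmxE unitfE; apply/negP => /det0P [v vn0 vH].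
have := quad_pos Uy vn0; rewrite /quad vH mul0mx mxE.
by rewrite ltxx.
Qed.

Lemma newton_Ud y nab : Ud y ->
  Ud (y - (1 + 4 * Num.sqrt (expR 1 * eta) * anorm (invmx (hess P y)) nab)^-1 *:
          (nab *m invmx (hess P y))).
Proof.
move=> Uy.
set H := hess P y. set Hi := invmx H.
have Hu : H \in unitmx := H_unit Uy.
have HiT : Hi^T = Hi by rewrite /Hi trmx_inv hess_sym.
set v := nab *m Hi.
have qv : quad y v = (nab *m Hi *m nab^T) 0 0.
  rewrite /quad /v trmx_mul HiT -/H.
  by rewrite -(mulmxA nab Hi H) mulVmx // mulmx1 mulmxA.
have q0 : 0 <= (nab *m Hi *m nab^T) 0 0 by rewrite -qv; case: (quad_parts v Uy).
set a := anorm Hi nab.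
have a0 : 0 <= a by apply: sqrtr_ge0.
have a2 : a ^+ 2 = (nab *m Hi *m nab^T) 0 0 by rewrite /a /anorm sqr_sqrtr.
set sg := Num.sqrt (expR 1 * eta).
have sg0 : 0 <= sg by apply: sqrtr_ge0.
have sg2 : sg ^+ 2 = expR 1 * eta by rewrite sqr_sqrtr // mulr_ge0 // ?ltW // expR_ge0.
set s := (1 + 4 * sg * a)^-1.
have X0 : 0 <= 4 * sg * a by rewrite mulr_ge0 // mulr_ge0.
have s0 : 0 < s by rewrite invr_gt0; lra.
have sa : 4 * sg * (s * a) < 1.
  have -> : 4 * sg * (s * a) = (4 * sg * a) / (1 + 4 * sg * a) by rewrite /s; ring.
  by rewrite ltr_pdivrMr ?mul1r; lra.
have qD : quad y (s *: v) = (s * a) ^+ 2.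
  by rewrite /quad !quad_mx qf_scale -quad_mx -/(quad y v) qv -a2 exprMn.
move=> i.
rewrite vbar_aff.
have -> : y - s *: v = (-1) *: (s *: v) + y by rewrite scaleN1r addrC.
rewrite aff_line -vbar_aff.
set ai := @vbar R n.+2 y 0 i. set zi := aff (cJ R i) 0 (s *: v).
have ai0 : 0 < ai := Uy i.
have [Pi _ _] := quad_parts (s *: v) Uy.
have := Pi i; rewrite qD -vbar_aff -/ai -/zi => Hi_.
have e0 : 0 < ei eta T rho i by apply: ei_pos.
have eE : ei eta T rho i <= sg ^+ 2 by rewrite sg2 mulrC; apply: ei_le.
have hz : zi ^+ 2 <= ei eta T rho i * ai ^+ 2 * (s * a) ^+ 2.
  have -> : zi ^+ 2 = (ei eta T rho i * ai ^+ 2) * ((ei eta T rho i)^-1 * ai^-1 ^+ 2 * zi ^+ 2).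
    by field; rewrite !gt_eqF.
  apply: ler_wpM2l => //; apply: mulr_ge0; [exact: ltW | exact: sqr_ge0].
set u := sg * (s * a).
have u0 : 0 <= u by rewrite /u mulr_ge0 // mulr_ge0 // ltW.
have u1 : 4 * u < 1 by rewrite /u mulrA.
have hz2 : zi ^+ 2 <= ai ^+ 2 * u ^+ 2.
  apply: le_trans hz _.
  have -> : ai ^+ 2 * u ^+ 2 = sg ^+ 2 * ai ^+ 2 * (s * a) ^+ 2 by rewrite /u; ring.
  apply: ler_wpM2r; first exact: sqr_ge0.
  by apply: ler_wpM2r; [exact: sqr_ge0 | exact: eE].
have hu2 : u ^+ 2 < 1 by nra.
have hzl : zi ^+ 2 < ai ^+ 2.
  apply: le_lt_trans hz2 _; rewrite -[X in _ < X]mulr1; rewrite ltr_pM2l ?exprn_gt0 //.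

nra.
Qed.

End Newton.

Section Dons.
Variables (R : realType) (n : nat) (eta beta T : R) (r : nat -> 'rV[R]_n.+2).
Hypotheses (eta0 : 0 < eta) (T1 : 1 < T) (beta0 : 0 < beta).

Lemma ub_eq (y : 'rV[R]_n.+1) i :
  @vbar R n.+2 ((1 - T^-1) *: y + ((n.+2)%:R * T)^-1 *: const_mx 1) 0 i =
  (1 - T^-1) * @vbar R n.+2 y 0 i + ((n.+2)%:R * T)^-1.
Proof.
have T0' : 0 < T by apply: lt_trans T1; exact: ltr01.
have T0 : T != 0 by rewrite gt_eqF.
case: (ord_cases i) => [[j ->]|->].
  by rewrite !vbar_lt !mxE mulr1.
rewrite !vbar_last.
under eq_bigr do rewrite !mxE mulr1.
rewrite big_split /= -mulr_sumr sumr_const card_ord -mulr_natl.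
have hn : 0 <= n%:R :> R := ler0n _ _.
field; rewrite T0 /=; apply/negP => /eqP; lra.
Qed.

Lemma rhot_bound (y : 'rV[R]_n.+1) (rk : 'rV[R]_n.+2) : @Ud R n y ->
  (forall i, rk 0 i <= (n.+2)%:R * T) ->
  forall i, (\row_i0 (if 2 * rk 0 i0 < (@vbar R n.+2 ((1 - T^-1) *: y + ((n.+2)%:R * T)^-1 *: const_mx 1) 0 i0)^-1
     then (@vbar R n.+2 ((1 - T^-1) *: y + ((n.+2)%:R * T)^-1 *: const_mx 1) 0 i0)^-1
     else rk 0 i0) : 'rV[R]_n.+2) 0 i <= (n.+2)%:R * T.
Proof.
move=> Uy rB i; rewrite mxE; case: ifP => _; last exact: rB.
have T0' : 0 < T by apply: lt_trans T1; exact: ltr01.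
have c0 : 0 < ((n.+2)%:R * T)^-1 by rewrite invr_gt0 mulr_gt0 // ltr0Sn.
have a0 : 0 <= 1 - T^-1.
  rewrite subr_ge0 invf_le1 //; exact: ltW.
rewrite ub_eq.
have v0 : 0 <= (1 - T^-1) * @vbar R n.+2 y 0 i by apply: mulr_ge0 => //; apply/ltW/Uy.
rewrite -[X in _ <= X]invrK lef_pV2 ?posrE //; first by rewrite lerDr.
by apply: ltr_wpDl.
Qed.

Lemma dons_inv k : let '(w, rho, g) := @dons R n.+2 eta beta T r k in
  (forall i, rho k 0 i <= (n.+2)%:R * T) /\ @Ud R n (w k.+1).
Proof.
elim: k => [|k IH] /=.
  split; last exact: Ud_const.
  by move=> i; rewrite mxE ler_peMr ?ltW // ltr0Sn.
move: IH; case E: (dons _ _ _ _ k) => [[w rho] g] [IHr IHw].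
rewrite !eqxx; split; first exact: rhot_bound.
apply: newton_Ud => //; exact: rhot_bound.
Qed.
End Dons.

Theorem lemma5 (R : realType) (d : nat) (eta beta T : R)
  (r : nat -> 'rV[R]_d) :
  (2 <= d)%N -> 1 < T -> 0 < eta -> 0 < beta ->
  (forall t, (1 <= t)%N -> (forall i, 0 <= r t 0 i <= 1) /\ r t != 0) ->
  forall t, (1 <= t)%N ->
    exists M : R, M <= Num.sqrt (eta * expR 1) /\
      self_concordant (@Cset R d) (dons_Phi eta beta T r t) M.
Proof.
case: d r => [|[|n]] r // _ T1 eta0 beta0 _ t _.
exists (Num.sqrt (eta * expR 1)); split => //.
rewrite /dons_Phi.
have := dons_inv r eta0 T1 beta0 t.
case: (dons _ _ _ _ t) => [[w rho] g] [rB _].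
exact: sc_P.
Qed.
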